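(* Let $L_1, M_1, L_2, M_2$ be Lagrangian subspaces of $(\mathbf R^{2n},\omega)$ such that $L_1, M_1, L_2$ are pairwise transverse and $M_2$ is transverse to $L_1$. If the Maslov form $[L_1,M_1,L_2]$ is positive definite, then the cross ratio $[L_1,M_1,L_2,M_2]$ is a diagonalizable endomorphism of $L_1$. If moreover $M_2$ is transverse to $L_2$ and the Maslov form $[L_2,M_2,L_1]$ is also positive definite, then $[L_1,M_1,L_2,M_2]$ has positive eigenvalues.
   Context: $\omega$ is the standard symplectic form on $\mathbf R^{2n}$, $\omega(x,y)={}^T x\begin{pmatrix}0&\mathrm{Id}\\-\mathrm{Id}&0\end{pmatrix}y$. A Lagrangian is an $n$-dimensional subspace on which $\omega$ vanishes; two Lagrangians are transverse if they intersect trivially. If $M$ is a Lagrangian transverse to a Lagrangian $L_2$ and $L_1$ is a Lagrangian transverse to $L_2$, there is a unique linear map $M_{L_1\to L_2}\colon L_1\to L_2$ with $M=\{e+M_{L_1\to L_2}(e): e\in L_1\}$. For pairwise transverse Lagrangians $L_1,M,L_2$ the Maslov form $[L_1,M,L_2]$ is the (symmetric, nondegenerate) bilinear form on $L_1$ given by $(v,w)\mapsto \omega(v, M_{L_1\to L_2}(w))$. The cross ratio is the endomorphism $[L_1,M_1,L_2,M_2]\mathrel{:=} -\,(M_2)_{L_2\to L_1}\circ (M_1)_{L_1\to L_2}$ of $L_1$. *)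

(* Defs.v *)
(* Vectors of R^{2n} are row vectors 'rV[R]_(n + n);
   linear subspaces are represented by square matrices 'M[R]_(n + n) via
   their row space (mxalgebra, scope %MS). Linear maps act on the right:
   the image of a row vector e under the map with matrix A is e *m A. *)
From HB Require Import structures.
From mathcomp Require Import all_boot all_order all_algebra.
From mathcomp Require Import reals.
Set Implicit Arguments. Unset Strict Implicit. Unset Printing Implicit Defensive.
Import Order.TTheory GRing.Theory Num.Theory.
Local Open Scope ring_scope.

Section Symplectic.
Variables (R : realType) (n : nat).

Definition Jmx : 'M[R]_(n + n) := block_mx 0 1%:M (- 1%:M) 0.

Definition omega (x y : 'rV[R]_(n + n)) : R := (x *m Jmx *m y^T) 0 0.

Definition lagrangian (L : 'M[R]_(n + n)) : Prop :=
  \rank L = n /\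
  forall u v : 'rV[R]_(n + n), (u <= L)%MS -> (v <= L)%MS -> omega u v = 0.

Definition transverse (L M : 'M[R]_(n + n)) : Prop := (L :&: M <= (0 : 'M[R]_(n + n)))%MS.

(* M_{L1 -> L2}: for M, L1 transverse to L2, the linear map L1 -> L2 with
   M = { e + M_{L1->L2}(e) : e in L1 }.  Concretely, e = a + b with a in L2,
   b in M (decomposition along the direct sum L2 (+) M = R^{2n}), and
   M_{L1->L2}(e) = -a, the unique f in L2 with e + f in M.  proj_mx L2 M is
   the projection onto L2 along M. (Only its restriction to L1 matters.) *)
Definition graph_map (M L1 L2 : 'M[R]_(n + n)) : 'M[R]_(n + n) :=
  - proj_mx L2 M.

Definition maslov_form (L1 M L2 : 'M[R]_(n + n)) (v w : 'rV[R]_(n + n)) : R :=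
  omega v (w *m graph_map M L1 L2).

Definition pos_def_on (U : 'M[R]_(n + n))
    (b : 'rV[R]_(n + n) -> 'rV[R]_(n + n) -> R) : Prop :=
  forall v : 'rV[R]_(n + n), (v <= U)%MS -> v != 0 -> 0 < b v v.

(* Cross ratio [L1, M1, L2, M2] := - (M2)_{L2->L1} o (M1)_{L1->L2},
   an endomorphism of L1 (row-vector convention: e |-> e *m C). *)
Definition cross_ratio (L1 M1 L2 M2 : 'M[R]_(n + n)) : 'M[R]_(n + n) :=
  - (graph_map M1 L1 L2 *m graph_map M2 L2 L1).

(* The endomorphism e |-> e *m C of the subspace U is diagonalizable:
   U has a basis (the rows of B) consisting of eigenvectors of C. *)
Definition diagonalizable_on (U C : 'M[R]_(n + n)) : Prop :=
  exists (B : 'M[R]_(\rank U, n + n)) (d : 'rV[R]_(\rank U)),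
    (B == U)%MS /\ B *m C = diag_mx d *m B.

Definition pos_eigenvalues_on (U C : 'M[R]_(n + n)) : Prop :=
  forall (lambda : R) (v : 'rV[R]_(n + n)),
    (v <= U)%MS -> v != 0 -> v *m C = lambda *: v -> 0 < lambda.

End Symplectic.

(* Main.v *)
Require Import Defs.
From HB Require Import structures.
From mathcomp Require Import all_boot all_order all_algebra.
From mathcomp Require Import reals.
From mathcomp Require Import all_boot all_order all_algebra ring.

Set Implicit Arguments. Unset Strict Implicit. Unset Printing Implicit Defensive.
Import Order.TTheory GRing.Theory Num.Theory Num.Def.
Local Open Scope ring_scope.
Local Open Scope sesquilinear_scope.

Section CoreC.
Variable C : numClosedFieldType.

Lemma adjM m k p (A : 'M[C]_(m, k)) (B : 'M[C]_(k, p)) :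
  (A *m B)^t* = B^t* *m A^t*.
Proof. by rewrite trmx_mul map_mxM. Qed.

Lemma adj1 m : (1%:M : 'M[C]_m)^t* = 1%:M.
Proof. by rewrite trmx1 map_mx1. Qed.

Lemma adj_diag_real m (d : 'rV[C]_m) : d \is a realmx -> (diag_mx d)^t* = diag_mx d.
Proof. by move=> dr; rewrite tr_diag_mx map_diag_mx realmxC. Qed.

Lemma entry_mul3 m k l (X : 'M[C]_(m, k)) (G : 'M[C]_k) (Y : 'M[C]_(k, l)) i j :
  (X *m G *m Y) i j = (row i X *m G *m col j Y) 0 0.
Proof.
rewrite !mxE; apply: eq_bigr => a _; rewrite !mxE; congr (_ * _).
by apply: eq_bigr => b _; rewrite !mxE.
Qed.

Lemma realmx_row m (x : 'rV[C]_m) f : (forall i, x 0 i = f i) ->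
  (forall i, f i \is Num.real) -> x \is a realmx.
Proof. by move=> xf fr; apply/mxOverP => i j; rewrite ord1 xf. Qed.

Lemma diag_realmx m (d : 'rV[C]_m) : d \is a realmx -> diag_mx d \is a realmx.
Proof.
move=> /mxOverP dr; apply/mxOverP => i j; rewrite mxE.
by case: (i == j) => /=; rewrite ?mulr1n ?mulr0n ?real0.
Qed.

Lemma herm_of n (S : 'M[C]_n) : S^t* = S -> S \is hermsymmx.
Proof. by move=> h; apply/is_hermitianmxP; rewrite expr0 scale1r h. Qed.

Lemma pos_complex m (G : 'M[C]_m) :
  G \is a realmx -> G^T = G ->
  (forall x : 'rV[C]_m, x \is a realmx -> x != 0 -> 0 < (x *m G *m x^T) 0 0) ->
  forall z : 'rV[C]_m, z != 0 -> 0 < (z *m G *m z^t*) 0 0.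
Proof.
move=> Gr Gs Hpos z z0.
pose x := z ^ (@Re C); pose y := z ^ (@Im C).
have xr : x \is a realmx by apply/mxOverP => i j; rewrite mxE Creal_Re.
have yr : y \is a realmx by apply/mxOverP => i j; rewrite mxE Creal_Im.
have zE : z = x + 'i *: y.
  by apply/matrixP => i j; rewrite !mxE -Crect.
have zcE : z ^ conjC = x - 'i *: y.
  apply/matrixP => i j; rewrite !mxE.
  by rewrite {1}[z i j]Crect conjC_rect ?Creal_Re ?Creal_Im.
have Hge : forall w : 'rV[C]_m, w \is a realmx -> 0 <= (w *m G *m w^T) 0 0.
  move=> w wr; have [->|w0] := eqVneq w 0; first by rewrite !mul0mx mxE.
  exact/ltW/Hpos.
have sym : forall u v : 'rV[C]_m, (u *m G *m v^T) 0 0 = (v *m G *m u^T) 0 0.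
  move=> u v; have tr1 : forall M : 'M[C]_1, M 0 0 = M^T 0 0 by move=> M; rewrite mxE.
  by rewrite tr1 !trmx_mul trmxK Gs mulmxA.
have -> : (z *m G *m z^t*) 0 0 = (x *m G *m x^T) 0 0 + (y *m G *m y^T) 0 0.
  rewrite -map_trmx zcE {1}zE !linearD /= !linearN /= !linearZ /=.
  rewrite !mulmxDl -!scalemxAl.
  have := sym y x.
  set a := x *m G *m x^T; set b := y *m G *m y^T; set c := x *m G *m y^T.
  set d := y *m G *m x^T => dc.
  clearbody a b c d; rewrite !mxE dc.
  have ii : 'i * 'i = -1 :> C by rewrite -expr2 sqrCi.
  rewrite mulrN mulrDr mulrA ii; ring.
have [x0|x0] := eqVneq x 0.
  have y0 : y != 0.
    by apply: contraNneq z0 => y0; rewrite zE x0 y0 scaler0 addr0.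
  by rewrite x0 !mul0mx mxE add0r; apply: Hpos.
by rewrite ltr_wpDr ?Hge //; apply: Hpos.
Qed.

Lemma coreC m (A G : 'M[C]_m) :
  A \is a realmx -> G \is a realmx -> G^T = G -> (A *m G)^T = A *m G ->
  (forall x : 'rV[C]_m, x \is a realmx -> x != 0 -> 0 < (x *m G *m x^T) 0 0) ->
  exists2 Y : 'M[C]_m, Y \in [predI realmx & unitmx] &
    exists e : 'rV[C]_m, e \is a realmx /\ Y *m A = diag_mx e *m Y.
Proof.
move=> Ar Gr Gs AGs Hpos.
have Gh : G^t* = G by rewrite -map_trmx realmxC.
pose P := spectralmx G; pose d := spectral_diag G.
have GE : G = invmx P *m diag_mx d *m P.
  exact/orthomx_spectralP/hermitian_normalmx/herm_of.
have Pu : P \is unitarymx := spectral_unitarymx G.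
have dr : d \is a realmx := hermitian_spectral_diag_real (herm_of Gh).
rewrite invmx_unitary // in GE.
have PPs : P *m P^t* = 1%:M by apply/unitarymxP.
have PsP : P^t* *m P = 1%:M by apply: mulmx1C.
have dpos : forall i, 0 < d 0 i.
  move=> i.
  have PGP : P *m G *m P^t* = diag_mx d.
    by rewrite GE !mulmxA PPs mul1mx -mulmxA PPs mulmx1.
  have -> : d 0 i = diag_mx d i i by rewrite mxE eqxx mulr1n.
  rewrite -PGP entry_mul3.
  have -> : col i (P^t*) = (row i P)^t* by apply/matrixP => a b; rewrite !mxE.
  apply: pos_complex => //; apply/eqP => ri0.
  have := congr1 (row i) PPs; rewrite row_mul ri0 mul0mx => /matrixP /(_ 0 i).
  by rewrite !mxE eqxx /= => /eqP; rewrite eq_sym oner_eq0.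
pose s := \row_i sqrtC ((d 0 i)^-1).
have sr : s \is a realmx.
  apply/mxOverP => i j; rewrite mxE; apply: ger0_real.
  by rewrite sqrtC_ge0 invr_ge0 ltW.
pose Dsi := diag_mx s; pose T := Dsi *m P.
have DDD : diag_mx d *m Dsi *m Dsi = 1%:M.
  rewrite /Dsi !mulmx_diag -diag_const_mx; congr diag_mx.
  apply/matrixP => i j; rewrite !mxE -mulrA -expr2 sqrtCK mulfV //.
  by rewrite gt_eqF.
have key : G *m T^t* *m T = 1%:M.
  rewrite /T adjM adj_diag_real // GE.
  rewrite !mulmxA -[P^t* *m diag_mx d *m P *m P^t*]mulmxA PPs mulmx1.
  by rewrite -!mulmxA [diag_mx d *m _]mulmxA [diag_mx d *m _ *m _]mulmxA DDD mul1mx.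
have Tu : T \in unitmx by case: (mulmx1_unit key).
clearbody T.
pose H := A *m G.
have Hh : H^t* = H by rewrite -map_trmx realmxC ?mxOverM.
pose S := T *m H *m T^t*.
have Sh : S^t* = S by rewrite /S adjM trmxCK [(T *m H)^t*]adjM Hh mulmxA.
pose Q := spectralmx S; pose e := spectral_diag S.
have SE : S = invmx Q *m diag_mx e *m Q.
  exact/orthomx_spectralP/hermitian_normalmx/herm_of.
have Qu : Q \in unitmx := spectral_unit S.
have er : e \is a realmx := hermitian_spectral_diag_real (herm_of Sh).
pose X := Q *m T.
have Xu : X \in unitmx by rewrite unitmx_mul Qu Tu.
have XA : X *m A = diag_mx e *m X.
  rewrite -[X *m A]mulmx1 -key /X !mulmxA.
  have -> : Q *m T *m A *m G *m T^t* = Q *m S by rewrite /S /H !mulmxA.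
  by rewrite SE !mulmxA mulmxV // mul1mx.
have simX : similar_in unitmx A (diag_mx e).
  by exists X => //; apply: similarW; rewrite ?row_free_unit.
have [Y Yin simY] := real_similar simX Ar (diag_realmx er).
exists Y => //; exists e; split => //.
move: Yin; rewrite inE => /andP[_ Yu].
exact/(similarP Yu).
Qed.
End CoreC.

From mathcomp Require Import complex.
Local Open Scope sesquilinear_scope.
Section CoreR.
Variable R : rcfType.
Local Notation CC := (complex.complex R).
Local Notation c := (complex.real_complex R).

Lemma map_c_real m k (M : 'M[R]_(m, k)) : M ^ c \is a realmx.
Proof. by apply/mxOverP => i j; rewrite mxE complex.complex_real. Qed.

Lemma realmx_c m k (M : 'M[CC]_(m, k)) : M \is a realmx -> M = map_mx c (map_mx (@complex.Re R) M).
Proof.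
by move=> /mxOverP Mr; apply/matrixP => i j; rewrite !mxE complex.RRe_real.
Qed.

Lemma coreR m (A G : 'M[R]_m) : G^T = G -> (A *m G)^T = A *m G ->
  (forall x : 'rV[R]_m, x != 0 -> 0 < (x *m G *m x^T) 0 0) ->
  exists Y, exists d : 'rV[R]_m, Y \in unitmx /\ Y *m A = diag_mx d *m Y.
Proof.
move=> Gs AGs Hpos.
have [|||||Y Yin [e [er YA]]] := @coreC _ m (map_mx c A) (map_mx c G).
- exact: map_c_real.
- exact: map_c_real.
- by rewrite map_trmx Gs.
- by rewrite -map_mxM map_trmx AGs.
- move=> x xr x0; rewrite (realmx_c xr) map_trmx -!map_mxM mxE.
  rewrite -(rmorph0 c) complex.ltcR; apply: Hpos.
  by apply: contraNneq x0 => e0; rewrite (realmx_c xr) e0 map_mx0.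
move: Yin; rewrite inE => /andP[Yr Yu].
exists (map_mx (@complex.Re R) Y), (map_mx (@complex.Re R) e); split.
  by rewrite -(map_unitmx c) -realmx_c.
apply: (@map_mx_inj _ _ c).
by rewrite !map_mxM map_diag_mx -!realmx_c.
Qed.
End CoreR.

Local Close Scope sesquilinear_scope.


Lemma entry3 (F : comPzRingType) m k l (X : 'M[F]_(m, k)) (G : 'M[F]_k) (Y : 'M[F]_(k, l)) i j :
  (X *m G *m Y) i j = (row i X *m G *m col j Y) 0 0.
Proof.
rewrite !mxE; apply: eq_bigr => a _; rewrite !mxE; congr (_ * _).
by apply: eq_bigr => b _; rewrite !mxE.
Qed.

Lemma sym_form (F : fieldType) N m (U : 'M[F]_N) (B : 'M[F]_N) (K : 'M[F]_(m, N)) :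
  (K <= U)%MS ->
  (forall u v : 'rV[F]_N, (u <= U)%MS -> (v <= U)%MS ->
     (u *m B *m v^T) 0 0 = (v *m B *m u^T) 0 0) ->
  (K *m B *m K^T)^T = K *m B *m K^T.
Proof.
move=> KU Hs; apply/matrixP => i j.
rewrite [LHS]mxE [LHS]entry3 [RHS]entry3.
have ct : forall a : 'I_m, col a K^T = (row a K)^T by move=> a; rewrite tr_row.
rewrite !ct.
rewrite Hs //.
  exact: submx_trans (row_sub _ _) KU.
exact: submx_trans (row_sub _ _) KU.
Qed.

Section Sympl.
Variables (R : realType) (n : nat).
Local Notation N := (n + n).
Local Notation V := 'rV[R]_N.
Local Notation J := (Jmx R n).

Lemma omegaE (u v : V) : omega u v = (u *m J *m v^T) 0 0.
Proof. by []. Qed.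

Lemma trJ : J^T = - J.
Proof.
by rewrite /Jmx tr_block_mx opp_block_mx !trmx0 !oppr0 trmx1 linearN /= trmx1 opprK.
Qed.

Lemma omegaC (u v : V) : omega u v = - omega v u.
Proof.
rewrite !omegaE; have tr1 : forall M : 'M[R]_1, M 0 0 = M^T 0 0 by move=> M; rewrite mxE.
by rewrite tr1 !trmx_mul trmxK trJ mulNmx mulmxN mulmxA [LHS]mxE.
Qed.

Lemma omegaDl (u1 u2 v : V) : omega (u1 + u2) v = omega u1 v + omega u2 v.
Proof. by rewrite !omegaE !mulmxDl mxE. Qed.

Lemma omegaDr (u v1 v2 : V) : omega u (v1 + v2) = omega u v1 + omega u v2.
Proof. by rewrite !omegaE linearD /= mulmxDr mxE. Qed.

Lemma omegaZr (u v : V) a : omega u (a *: v) = a * omega u v.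
Proof. by rewrite !omegaE linearZ /= -scalemxAr mxE. Qed.

Lemma omegaNr (u v : V) : omega u (- v) = - omega u v.
Proof. by rewrite -scaleN1r omegaZr mulN1r. Qed.

Lemma full_of (L M : 'M[R]_N) : lagrangian L -> lagrangian M -> transverse L M ->
  row_full (L + M)%MS.
Proof.
move=> [rL _] [rM _] t; rewrite /row_full mxrank_disjoint_sum ?rL ?rM //.
by apply/eqP; rewrite -submx0.
Qed.

Lemma gm_sub k (M L1 L2 : 'M[R]_N) (e : 'M[R]_(k, N)) : (e *m graph_map M L1 L2 <= L2)%MS.
Proof. by rewrite /graph_map mulmxN eqmx_opp proj_mx_sub. Qed.

Lemma gm_graph k (M L1 L2 : 'M[R]_N) (e : 'M[R]_(k, N)) : row_full (L2 + M)%MS ->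
  ((e + e *m graph_map M L1 L2)%R <= M)%MS.
Proof.
move=> f; rewrite /graph_map mulmxN; apply: proj_mx_compl_sub; exact: submx_full.
Qed.

Lemma gm_sym (M L1 L2 : 'M[R]_N) : lagrangian L1 -> lagrangian L2 -> lagrangian M ->
  row_full (L2 + M)%MS -> forall v w : V, (v <= L1)%MS -> (w <= L1)%MS ->
  omega v (w *m graph_map M L1 L2) = omega w (v *m graph_map M L1 L2).
Proof.
move=> [_ HL1] [_ HL2] [_ HM] f v w vL wL.
have := HM _ _ (gm_graph L1 v f) (gm_graph L1 w f).
rewrite omegaDl !omegaDr (HL1 v w) // (HL2 (v *m _) (w *m _)) ?gm_sub // add0r addr0.
by rewrite [omega (v *m _) w]omegaC => /eqP; rewrite subr_eq0 => /eqP.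
Qed.

Lemma gm_inj (M L1 L2 : 'M[R]_N) : row_full (L2 + M)%MS -> transverse L1 M ->
  forall v : V, (v <= L1)%MS -> v != 0 -> v *m graph_map M L1 L2 != 0.
Proof.
move=> f t v vL; apply: contraNneq => v0.
have := gm_graph L1 v f; rewrite v0 addr0 => vM.
by rewrite -submx0; apply: submx_trans t; rewrite sub_capmx vL vM.
Qed.

End Sympl.

Unset Implicit Arguments.
Set Strict Implicit.

Theorem corollary3p4 (R : realType) (n : nat) (L1 M1 L2 M2 : 'M[R]_(n + n)) :
  lagrangian L1 -> lagrangian M1 -> lagrangian L2 -> lagrangian M2 ->
  transverse L1 M1 -> transverse M1 L2 -> transverse L1 L2 ->
  transverse M2 L1 ->
  pos_def_on L1 (maslov_form L1 M1 L2) ->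
  diagonalizable_on L1 (cross_ratio L1 M1 L2 M2) /\
  (transverse M2 L2 -> pos_def_on L2 (maslov_form L2 M2 L1) ->
   pos_eigenvalues_on L1 (cross_ratio L1 M1 L2 M2)).
Proof.
move=> HL1 HM1 HL2 HM2 t11 t12 t3 t4 gpos.
have f1 : row_full (L2 + M1)%MS.
  by apply: full_of => //; rewrite /transverse capmxC.
have f2 : row_full (L1 + M2)%MS.
  by apply: full_of => //; rewrite /transverse capmxC.
rewrite /pos_eigenvalues_on /diagonalizable_on.
have hposE : pos_def_on L2 (maslov_form L2 M2 L1) -> forall x : 'rV[R]_(n + n),
   (x <= L2)%MS -> x != 0 -> 0 < omega x (x *m graph_map M2 L2 L1) by [].
move: gpos hposE; rewrite /pos_def_on /maslov_form.
have CE : cross_ratio L1 M1 L2 M2 = - (graph_map M1 L1 L2 *m graph_map M2 L2 L1) by [].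
have gsym := gm_sym HL1 HL2 HM1 f1.
have hsym := gm_sym HL2 HL1 HM2 f2.
have G1sub := @gm_sub R n _ M1 L1 L2.
have G2sub := @gm_sub R n _ M2 L2 L1.
have G1inj := gm_inj f1 t11.
move: CE gsym hsym G1sub G2sub G1inj.
rewrite /cross_ratio.
move: (graph_map M1 L1 L2) (graph_map M2 L2 L1) => G1 G2.
move=> _ gsym hsym G1sub G2sub G1inj gpos hposE.
pose Cx := - (G1 *m G2); have CE : Cx = - (G1 *m G2) by [].
rewrite -/Cx; clearbody Cx.
have Cstab : forall k (X : 'M[R]_(k, n + n)), (X *m Cx <= L1)%MS.
  by move=> k X; rewrite CE mulmxN eqmx_opp mulmxA G2sub.
have key : forall v w : 'rV[R]_(n + n), (v <= L1)%MS -> (w <= L1)%MS ->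
    omega v ((w *m Cx) *m G1) = omega (v *m G1) ((w *m G1) *m G2).
  move=> v w vL wL.
  rewrite gsym ?Cstab // (omegaC (w *m Cx)) CE mulmxN mulmxA omegaNr opprK //.
split; last first.
  move=> t5 hpos lam v vL v0 ev.
  have a_pos : 0 < omega v (v *m G1) := gpos v vL v0.
  have b_pos : 0 < omega (v *m G1) ((v *m G1) *m G2).
    exact: (hpos _ (G1sub _ _) (G1inj _ vL v0)).
  have := key v v vL vL; rewrite ev -scalemxAl omegaZr => e.
  by move: b_pos; rewrite -e pmulr_lgt0.
pose K := row_base L1.
have KL : (K :=: L1)%MS := eq_row_base L1.
have Kfree : row_free K := row_base_free L1.
clearbody K.
pose Cr := K *m Cx *m pinvmx K.
have KC : K *m Cx = Cr *m K by rewrite /Cr mulmxKpV // KL Cstab.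
pose B0 := Jmx R n *m G1^T.
pose Gm := K *m B0 *m K^T.
have gE : forall u v : 'rV[R]_(n + n), omega u (v *m G1) = (u *m B0 *m v^T) 0 0.
  by move=> u v; rewrite omegaE trmx_mul !mulmxA.
clearbody B0.
have KsubL : (K <= L1)%MS by rewrite KL.
have Gs : Gm^T = Gm.
  apply: (sym_form KsubL) => u v uL vL; rewrite -!gE; exact: gsym.
have CGs : (Cr *m Gm)^T = Cr *m Gm.
  have -> : Cr *m Gm = K *m (Cx *m B0) *m K^T by rewrite /Gm !mulmxA -KC.
  apply: (sym_form KsubL) => u v uL vL; rewrite !mulmxA -!gE.
  rewrite (gsym (u *m Cx)) ?Cstab // (key v u) // (hsym (v *m G1)) ?G1sub //.
  by rewrite -(key u v) // (gsym u) ?Cstab.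
have Gpos : forall x : 'rV[R]_(\rank L1), x != 0 -> 0 < (x *m Gm *m x^T) 0 0.
  move=> x x0.
  have xK0 : x *m K != 0 by rewrite mulmx_free_eq0.
  have xKL : (x *m K <= L1)%MS by rewrite -KL submxMl.
  have := gpos _ xKL xK0; rewrite gE /Gm trmx_mul !mulmxA //.
have [Y [d [Yu YC]]] := coreR Gs CGs Gpos.
exists (Y *m K), d; split.
  apply/eqmxP; apply: eqmx_trans KL; apply: eqmxMfull.
  by rewrite row_full_unit.
by rewrite -mulmxA KC mulmxA YC mulmxA.
Qed.
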